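(* Let $\mathcal{H}$ be a real or complex Hilbert space and let $S:\mathcal{H}\to\mathcal{H}$ be a (not necessarily densely defined) linear operator. Let $M_{S,S}$ be the operator on $\mathcal{H}\times\mathcal{H}$ with domain $\operatorname{dom} S\times\operatorname{dom} S$ given by $M_{S,S}(h,k)=(-Sk,Sh)$. The following are equivalent: (i) $S$ is densely defined and self-adjoint; (ii) every non-zero real number $t$ is in the resolvent set of $M_{S,S}$ and $\|R_{S,S}(t)\|\le 1/|t|$ for all real $t\neq 0$.
   Context: A scalar $\lambda$ is in the resolvent set of $M_{S,S}$ if $M_{S,S}-\lambda I$ is injective with everywhere defined bounded inverse on $\mathcal{H}\times\mathcal{H}$; then $R_{S,S}(\lambda):=(M_{S,S}-\lambda I)^{-1}$. The norm is the operator norm for the product Hilbert space $\mathcal{H}\times\mathcal{H}$. *)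

(* Defs.v *)
From HB Require Import structures.
From mathcomp Require Import all_boot all_order all_algebra.
From mathcomp Require Import complex.
From mathcomp Require Import reals.

Set Implicit Arguments.
Unset Strict Implicit.
Unset Printing Implicit Defensive.

Import Order.TTheory GRing.Theory Num.Theory.
Local Open Scope ring_scope.

Section Hilbert.
Variables (K : numFieldType) (conj : K -> K) (V : lmodType K).
Variable ip : V -> V -> K.   (* inner product, linear in the first argument *)

Definition nrm2 (x : V) : K := ip x x.

Definition is_hilbert : Prop :=
  [/\ (forall a x y z, ip (a *: x + y) z = a * ip x z + ip y z),
      (forall x y, ip x y = conj (ip y x)),
      (forall x, 0 <= ip x x),
      (forall x, ip x x = 0 -> x = 0)
    &
      (forall u : nat -> V,
         (forall e : K, 0 < e -> exists N : nat, forall m n : nat,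
             (N <= m)%N -> (N <= n)%N -> nrm2 (u m - u n) < e ^+ 2) ->
         exists l : V, forall e : K, 0 < e -> exists N : nat, forall n : nat,
             (N <= n)%N -> nrm2 (u n - l) < e ^+ 2)].

Definition is_linear_operator (D : V -> Prop) (S : V -> V) : Prop :=
  [/\ D 0,
      (forall a x y, D x -> D y -> D (a *: x + y))
    & (forall a x y, D x -> D y -> S (a *: x + y) = a *: S x + S y)].

Definition densely_defined (D : V -> Prop) : Prop :=
  forall x e, 0 < e -> exists2 y, D y & nrm2 (x - y) < e ^+ 2.

Definition adjoint_graph (D : V -> Prop) (S : V -> V) (y z : V) : Prop :=
  forall x, D x -> ip (S x) y = ip x z.

(* S* = S (equality of operators, i.e. of graphs) *)
Definition self_adjoint (D : V -> Prop) (S : V -> V) : Prop :=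
  forall y z, adjoint_graph D S y z <-> (D y /\ z = S y).

Definition nrm2P (u : V * V) : K := nrm2 u.1 + nrm2 u.2.

Definition domM (D : V -> Prop) (u : V * V) : Prop := D u.1 /\ D u.2.

Definition MSS (S : V -> V) (u : V * V) : V * V := (- S u.2, S u.1).

Definition MSS_shift (S : V -> V) (lam : K) (u : V * V) : V * V :=
  ((MSS S u).1 - lam *: u.1, (MSS S u).2 - lam *: u.2).

Definition opnorm_le (T : V * V -> V * V) (c : K) : Prop :=
  0 <= c /\ forall u, nrm2P (T u) <= c ^+ 2 * nrm2P u.

Definition bounded_op (T : V * V -> V * V) : Prop := exists c, opnorm_le T c.

Definition is_inverse_shift (D : V -> Prop) (S : V -> V) (lam : K)
    (T : V * V -> V * V) : Prop :=
  (forall u, domM D (T u) /\ MSS_shift S lam (T u) = u) /\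
  (forall w, domM D w -> T (MSS_shift S lam w) = w).

Definition in_resolvent (D : V -> Prop) (S : V -> V) (lam : K) : Prop :=
  (forall w1 w2, domM D w1 -> domM D w2 ->
     MSS_shift S lam w1 = MSS_shift S lam w2 -> w1 = w2) /\
  exists2 T, is_inverse_shift D S lam T & bounded_op T.

Definition corollary_equiv (D : V -> Prop) (S : V -> V) : Prop :=
  (densely_defined D /\ self_adjoint D S) <->
  (forall t : K, t \is Num.real -> t != 0 ->
     in_resolvent D S t /\
     forall T, is_inverse_shift D S t T -> opnorm_le T (`|t|)^-1).

End Hilbert.

(* Main.v *)
Require Import Defs.
From HB Require Import structures.
From mathcomp Require Import all_boot all_order all_algebra.
From mathcomp Require Import complex.
From mathcomp Require Import reals.
From mathcomp Require Import classical_sets.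
From mathcomp Require Import ring lra.
From Stdlib Require Import ClassicalEpsilon.
Set Implicit Arguments.
Unset Strict Implicit.
Unset Printing Implicit Defensive.
Import Order.TTheory GRing.Theory Num.Theory.
Local Open Scope ring_scope.

Lemma fchoice {A B : Type} (P : A -> B -> Prop) :
  (forall a, exists b, P a b) -> exists f : A -> B, forall a, P a (f a).
Proof.
move=> H; exists (fun a => proj1_sig (constructive_indefinite_description _ (H a))).
by move=> a; case: (constructive_indefinite_description _ (H a)).
Qed.

Lemma zid1 (V : zmodType) (a b u : V) : a - b = (u - b) + - (u - a).
Proof. by rewrite opprB [RHS]addrC -[RHS]addrA addKr. Qed.
Lemma zid2 (V : zmodType) (x y u s : V) : x + u - s = (x - y) + (u - (s - y)).
Proof. by rewrite opprB [RHS]addrCA (addrA (x - y)) addrNK [RHS]addrCA [RHS]addrA. Qed.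
Lemma zid3 (V : zmodType) (x y u s : V) : - u - x - s = (y - x) + - (u - (- s - y)).
Proof.
rewrite opprB (addrAC (- s)) [RHS]addrC addrA addrNK.
rewrite (addrC (- s)) addrAC //.
Qed.
Lemma zid4 (V : zmodType) (u x : V) : - (- u - x) - x = u.
Proof. by rewrite opprB opprK addrC addKr. Qed.
Lemma zid5 (V : zmodType) (u x : V) : x + u - x = u.
Proof. by rewrite addrC addKr. Qed.

Section Reals.
Variable R : realType.

Lemma zero_of_small (y K : R) : 0 <= K -> (forall d, 0 < d -> y ^+ 2 <= d * K) -> y = 0.
Proof.
move=> K0 H; apply/eqP; rewrite -sqrf_eq0; apply/eqP.
have y0 : 0 <= y ^+ 2 by rewrite sqr_ge0.
apply/eqP; rewrite eq_le y0 andbT; apply/negP => /negP; rewrite -ltNge => yp.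
have h := H (y ^+ 2 / (K + 1)) (divr_gt0 yp (ltr_wpDl K0 ltr01)).
have K1 : K + 1 != 0 by rewrite gt_eqF // (ltr_wpDl K0 ltr01).
have e : y ^+ 2 - y ^+ 2 / (K + 1) * K = y ^+ 2 / (K + 1) by field.
have : 0 < y ^+ 2 - y ^+ 2 / (K + 1) * K by rewrite e divr_gt0 // (ltr_wpDl K0 ltr01).
lra.
Qed.

Lemma disc (A B C : R) : 0 <= C -> (forall s, 0 <= A - 2 * s * B + s ^+ 2 * C) ->
  B ^+ 2 <= A * C.
Proof.
move=> C0 H; have [Cz|Cp] := eqVneq C 0.
  have [Bz|Bn] := eqVneq B 0; first by rewrite Bz Cz; lra.
  have := H ((A + 1) / (2 * B)); rewrite Cz mulr0 addr0.
  have -> : 2 * ((A + 1) / (2 * B)) * B = A + 1 by field; rewrite Bn.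
  lra.
have Cpos : 0 < C by rewrite lt_neqAle eq_sym Cp C0.
have := H (B / C).
have -> : A - 2 * (B / C) * B + (B / C) ^+ 2 * C = (A * C - B ^+ 2) / C by field; rewrite Cp.
by move=> h; have := mulr_ge0 h (ltW Cpos); rewrite divfK //; lra.
Qed.

Definition eps (n : nat) : R := (n.+1%:R)^-1.

Lemma eps_gt0 n : 0 < eps n.
Proof. by rewrite /eps invr_gt0 ltr0Sn. Qed.

Lemma arch_small (d : R) : 0 < d -> exists N : nat, forall n, (N <= n)%N -> eps n < d.
Proof.
move=> d0; rewrite /eps; exists (Num.Def.archi_bound d^-1) => n Nn.
have di : 0 <= d^-1 by rewrite invr_ge0 ltW.
have h := archi_boundP di.
have : d^-1 < n.+1%:R.
  apply: (lt_le_trans h); rewrite ler_nat; exact: (leq_trans Nn).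
move=> h2.
by rewrite -(invrK d) ltf_pV2 ?posrE ?invr_gt0 ?ltr0Sn.
Qed.

Lemma eps_sq_le n : eps n ^+ 2 <= eps n.
Proof.
have h1 : eps n <= 1 by rewrite /eps invf_le1 ?ltr0Sn // ler1n.
have h0 := eps_gt0 n; rewrite expr2; nra.
Qed.

End Reals.


Section Hilb.
Variables (R : realType) (W : lmodType R) (ip : W -> W -> R).
Hypothesis hH : is_hilbert id ip.

Let lin : forall a x y z, ip (a *: x + y) z = a * ip x z + ip y z.
Proof. by case: hH. Qed.
Lemma ipC x y : ip x y = ip y x.
Proof. by case: hH => _ h _ _ _; rewrite h. Qed.
Lemma n2_ge0 x : 0 <= ip x x.
Proof. by case: hH. Qed.
Lemma n2_eq0 x : ip x x = 0 -> x = 0.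
Proof. by case: hH => _ _ _ h _; apply: h. Qed.

Lemma ip0l z : ip 0 z = 0.
Proof. have := lin 1 0 0 z. rewrite scaler0 addr0 mul1r. lra. Qed.
Lemma ipDl x y z : ip (x + y) z = ip x z + ip y z.
Proof. by have := lin 1 x y z; rewrite scale1r mul1r. Qed.
Lemma ipZl a x z : ip (a *: x) z = a * ip x z.
Proof. by have := lin a x 0 z; rewrite addr0 ip0l addr0. Qed.
Lemma ipNl x z : ip (- x) z = - ip x z.
Proof. by rewrite -scaleN1r ipZl mulN1r. Qed.
Lemma ipBl x y z : ip (x - y) z = ip x z - ip y z.
Proof. by rewrite ipDl ipNl. Qed.
Lemma ip0r z : ip z 0 = 0.
Proof. by rewrite ipC ip0l. Qed.
Lemma ipDr x y z : ip z (x + y) = ip z x + ip z y.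
Proof. by rewrite ipC ipDl !(ipC z). Qed.
Lemma ipZr a x z : ip z (a *: x) = a * ip z x.
Proof. by rewrite ipC ipZl ipC. Qed.
Lemma ipNr x z : ip z (- x) = - ip z x.
Proof. by rewrite ipC ipNl ipC. Qed.
Lemma ipBr x y z : ip z (x - y) = ip z x - ip z y.
Proof. by rewrite ipDr ipNr. Qed.

Lemma n2D x y : ip (x + y) (x + y) = ip x x + 2 * ip x y + ip y y.
Proof. rewrite !ipDl !ipDr (ipC y x); ring. Qed.
Lemma n2B x y : ip (x - y) (x - y) = ip x x - 2 * ip x y + ip y y.
Proof. rewrite !ipBl !ipBr (ipC y x); ring. Qed.
Lemma n2Z a x : ip (a *: x) (a *: x) = a ^+ 2 * ip x x.
Proof. rewrite ipZl ipZr; ring. Qed.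
Lemma n2N x : ip (- x) (- x) = ip x x.
Proof. rewrite ipNl ipNr; ring. Qed.
Lemma n2_sym x y : ip (x - y) (x - y) = ip (y - x) (y - x).
Proof. by rewrite -opprB n2N. Qed.

Lemma CS x y : ip x y ^+ 2 <= ip x x * ip y y.
Proof.
apply: disc; first exact: n2_ge0.
move=> s; have := n2_ge0 (x - s *: y).
by rewrite n2B ipZr n2Z; lra.
Qed.

Lemma n2D_le x y : ip (x + y) (x + y) <= 2 * ip x x + 2 * ip y y.
Proof.
have := n2_ge0 (x - y); rewrite n2B n2D; lra.
Qed.

Definition cvg_to (u : nat -> W) (l : W) :=
  forall d, 0 < d -> exists N : nat, forall n, (N <= n)%N -> ip (u n - l) (u n - l) < d.

Lemma complete (u : nat -> W) :
  (forall d, 0 < d -> exists N : nat, forall m n : nat,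
     (N <= m)%N -> (N <= n)%N -> ip (u m - u n) (u m - u n) < d) ->
  exists l, cvg_to u l.
Proof.
move=> Hc; case: hH => _ _ _ _ hc.
have [l Hl] : exists l : W, forall e : R, 0 < e -> exists N : nat, forall n : nat,
     (N <= n)%N -> nrm2 ip (u n - l) < e ^+ 2.
  apply: hc => e e0; apply: Hc; exact: exprn_gt0.
exists l => d d0; have sd : 0 < Num.sqrt d by rewrite sqrtr_gt0.
have [N HN] := Hl (Num.sqrt d) sd.
by exists N => n /HN; rewrite sqr_sqrtr // ltW.
Qed.


Lemma sqr_add_le (a b : R) : (a + b) ^+ 2 <= 2 * a ^+ 2 + 2 * b ^+ 2.
Proof. have := sqr_ge0 (a - b). rewrite !expr2; lra. Qed.

Lemma eventually2 (P Q : nat -> Prop) :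
  (exists N, forall n, (N <= n)%N -> P n) -> (exists N, forall n, (N <= n)%N -> Q n) ->
  exists n, P n /\ Q n.
Proof.
move=> [N1 H1] [N2 H2]; exists (maxn N1 N2); split.
  by apply: H1; rewrite leq_maxl.
by apply: H2; rewrite leq_maxr.
Qed.

Lemma dense_perp (C : W -> Prop) : C 0 -> (forall a x y, C x -> C y -> C (a *: x + y)) ->
  (forall v, (forall c, C c -> ip c v = 0) -> v = 0) ->
  forall x e, 0 < e -> exists2 c, C c & ip (x - c) (x - c) < e ^+ 2.
Proof.
move=> C0 Clin Cperp x e e0.
pose E : set R := fun r => exists2 c, C c & r = ip (x - c) (x - c).
have En : exists r, E r by exists (ip (x - 0) (x - 0)); exists 0.
have Elb : has_lbound E by exists 0 => r [c _ ->]; exact: n2_ge0.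
pose d := inf E.
have dle c : C c -> d <= ip (x - c) (x - c).
  by move=> Cc; apply: (ge_inf Elb); exists c.
have ex n : exists c, C c /\ ip (x - c) (x - c) < d + eps R n.
  have : inf E < d + eps R n by rewrite ltrDl eps_gt0.
  by move/(inf_lt En) => [r [c Cc ->] lt]; exists c.
have [c Hc] := fchoice ex.
pose v n := x - c n.
have CD a b : C a -> C b -> C (a + b).
  by move=> Ca Cb; have := Clin 1 a b Ca Cb; rewrite scale1r.
have CZ a b : C b -> C (a *: b).
  by move=> Cb; have := Clin a b 0 Cb C0; rewrite addr0.
have cauchy n m : ip (v n - v m) (v n - v m) <= 2 * eps R n + 2 * eps R m.
  pose mid := 2^-1 *: (c n + c m).
  have Cmid : C mid by apply: CZ; apply: CD; [case: (Hc n) | case: (Hc m)].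
  have ev : v n + v m = 2 *: (x - mid).
    rewrite scalerBr scalerA mulfV ?pnatr_eq0 // scale1r scaler_nat mulr2n opprD.
    by rewrite /v addrACA.
  have par : ip (v n - v m) (v n - v m) + ip (v n + v m) (v n + v m)
             = 2 * ip (v n) (v n) + 2 * ip (v m) (v m).
    rewrite (n2B (v n)) (n2D (v n)); ring.
  have h4 : ip (v n + v m) (v n + v m) = 4 * ip (x - mid) (x - mid).
    by rewrite ev n2Z; ring.
  have hd : d <= ip (x - mid) (x - mid) := dle _ Cmid. case: (Hc n) => _ hn; case: (Hc m) => _ hm.
  rewrite /v in par h4 *; lra.
have [l Hl] : exists l, cvg_to v l.
  apply: complete => del del0.
  have [N HN] := arch_small (divr_gt0 del0 (ltr0Sn _ 3) : 0 < del / 4%:R).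
  exists N => m n Nm Nn; apply: (le_lt_trans (cauchy m n)).
  have := HN _ Nm; have := HN _ Nn; lra.
have orth n c' : C c' -> ip (v n) c' ^+ 2 <= eps R n * ip c' c'.
  move=> Cc'; apply: disc; first exact: n2_ge0.
  move=> s; have Cs : C (s *: c' + c n) by apply: Clin => //; case: (Hc n).
  have := dle _ Cs.
  have -> : x - (s *: c' + c n) = v n - s *: c' by rewrite /v opprD addrA addrAC.
  rewrite n2B ipZr n2Z; case: (Hc n) => _ hn; rewrite /v in hn *; lra.
have l0 : l = 0.
  apply: Cperp => c' Cc'; rewrite ipC.
  apply: (@zero_of_small _ _ (4 * ip c' c')); first by rewrite mulr_ge0 ?n2_ge0.
  move=> del del0.
  have [n [h1 h2]] := eventually2 (Hl del del0) (arch_small del0).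
  have e1 : ip l c' = ip (l - v n) c' + ip (v n) c' by rewrite ipBl; ring.
  have cs := CS (l - v n) c'.
  have o := orth n c' Cc'.
  have n2c := n2_ge0 c'.
  rewrite n2_sym in cs.
  have b1 : ip (v n - l) (v n - l) * ip c' c' <= del * ip c' c'.
    by rewrite ler_wpM2r // ltW.
  have b2 : eps R n * ip c' c' <= del * ip c' c'.
    by rewrite ler_wpM2r // ltW.
  have := sqr_add_le (ip (l - v n) c') (ip (v n) c').
  rewrite -e1; lra.
have e2 : 0 < e ^+ 2 by rewrite exprn_gt0.
have [N HN] := Hl _ e2.
exists (c N); first by case: (Hc N).
by have := HN N (leqnn N); rewrite l0 subr0.
Qed.

End Hilb.

Section Prod.
Variables (R : realType) (V : lmodType R) (ip : V -> V -> R).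
Hypothesis hH : is_hilbert id ip.

Definition ipP (u v : V * V) : R := ip u.1 v.1 + ip u.2 v.2.

Lemma nrm2P_ipP u : nrm2P ip u = ipP u u. Proof. by []. Qed.

Lemma hilbP : is_hilbert id ipP.
Proof.
split.
- move=> a x y z; rewrite /ipP /= !(ipDl hH) !(ipZl hH); ring.
- by move=> x y; rewrite /ipP (ipC hH x.1) (ipC hH x.2).
- by move=> x; rewrite /ipP addr_ge0 // n2_ge0.
- move=> [x1 x2]; rewrite /ipP /= => h.
  have h1 := n2_ge0 hH x1; have h2 := n2_ge0 hH x2.
  have e1 : ip x1 x1 = 0 by lra.
  have e2 : ip x2 x2 = 0 by lra.
  by rewrite (n2_eq0 hH e1) (n2_eq0 hH e2).
- move=> u Hu.
  have Hc i : (i = 1 \/ i = 2)%N -> exists l, cvg_to ip (fun n => if i == 1%N then (u n).1 else (u n).2) l.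
    move=> hi; apply: (complete hH) => d d0.
    have sd : 0 < Num.sqrt d by rewrite sqrtr_gt0.
    have [N HN] := Hu _ sd; exists N => m n Nm Nn.
    have := HN m n Nm Nn; rewrite sqr_sqrtr ?ltW // /nrm2 /ipP /=.
    have h1 := n2_ge0 hH ((u m).1 - (u n).1); have h2 := n2_ge0 hH ((u m).2 - (u n).2).
    by case: hi => ->; rewrite /=; lra.
  have [l1 H1] := Hc 1%N (or_introl erefl).
  have [l2 H2] := Hc 2%N (or_intror erefl).
  exists (l1, l2) => e e0.
  have e2 : 0 < e ^+ 2 / 2 by rewrite divr_gt0 // exprn_gt0.
  have [N1 HN1] := H1 _ e2; have [N2 HN2] := H2 _ e2.
  exists (maxn N1 N2) => n Nn.
  have := HN1 n (leq_trans (leq_maxl _ _) Nn); have := HN2 n (leq_trans (leq_maxr _ _) Nn).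
  rewrite /nrm2 /ipP /=; lra.
Qed.

End Prod.

Section Op.
Variables (R : realType) (V : lmodType R) (ip : V -> V -> R).
Hypothesis hH : is_hilbert id ip.
Variables (D : V -> Prop) (S : V -> V).
Hypothesis hS : is_linear_operator D S.

Lemma D0 : D 0. Proof. by case: hS. Qed.
Lemma Dlin a x y : D x -> D y -> D (a *: x + y). Proof. by case: hS => _ h _; apply: h. Qed.
Lemma Slin a x y : D x -> D y -> S (a *: x + y) = a *: S x + S y.
Proof. by case: hS => _ _ h; apply: h. Qed.
Lemma DD x y : D x -> D y -> D (x + y).
Proof. by move=> dx dy; have := Dlin 1 dx dy; rewrite scale1r. Qed.
Lemma DZ a x : D x -> D (a *: x).
Proof. by move=> dx; have := Dlin a dx D0; rewrite addr0. Qed.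
Lemma DN x : D x -> D (- x).
Proof. by move=> dx; rewrite -scaleN1r; apply: DZ. Qed.
Lemma DB x y : D x -> D y -> D (x - y).
Proof. by move=> dx dy; apply: DD => //; apply: DN. Qed.
Lemma S0 : S 0 = 0.
Proof.
have h := Slin 1 D0 D0; rewrite scaler0 addr0 scale1r in h.
by apply: (@addrI _ (S 0)); rewrite addr0 -h.
Qed.
Lemma SD x y : D x -> D y -> S (x + y) = S x + S y.
Proof. by move=> dx dy; have := Slin 1 dx dy; rewrite !scale1r. Qed.
Lemma SZ a x : D x -> S (a *: x) = a *: S x.
Proof. by move=> dx; have := Slin a dx D0; rewrite !addr0 S0 addr0. Qed.
Lemma SN x : D x -> S (- x) = - S x.
Proof. by move=> dx; rewrite -!scaleN1r SZ. Qed.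
Lemma SB x y : D x -> D y -> S (x - y) = S x - S y.
Proof. by move=> dx dy; rewrite SD ?SN //; apply: DN. Qed.

Lemma domM_lin a w1 w2 : domM D w1 -> domM D w2 -> domM D (a *: w1 + w2).
Proof. by move=> [h1 h2] [k1 k2]; split; apply: Dlin. Qed.

Lemma MS_lin t a w1 w2 : domM D w1 -> domM D w2 ->
  MSS_shift S t (a *: w1 + w2) = a *: MSS_shift S t w1 + MSS_shift S t w2.
Proof.
case: w1 => h1 k1; case: w2 => h2 k2 [/= dh1 dk1] [/= dh2 dk2].
rewrite /MSS_shift /MSS /=; congr pair; rewrite Slin //.
- by rewrite !scalerDr !scalerA (mulrC t a) -!scalerA /= scalerBr scalerN !opprD addrACA.
- by rewrite !scalerDr !scalerA (mulrC t a) -!scalerA /= scalerBr !opprD addrACA.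

Qed.

Lemma MS_split t w : MSS_shift S t w = MSS S w - t *: w.
Proof. by case: w. Qed.


Lemma sym_of_sa : self_adjoint ip D S -> forall x y, D x -> D y -> ip (S x) y = ip x (S y).
Proof. by move=> sa x y dx dy; have [_ h] := sa y (S y); apply: h. Qed.

Lemma normid (sym : forall x y, D x -> D y -> ip (S x) y = ip x (S y)) t w :
  domM D w -> nrm2P ip (MSS_shift S t w) = nrm2P ip (MSS S w) + t ^+ 2 * nrm2P ip w.
Proof.
case: w => h k [/= dh dk]; rewrite /nrm2P /nrm2 /MSS_shift /MSS /=.
rewrite !(ipBl hH) !(ipBr hH) !(ipNl hH) !(ipNr hH) !(ipZl hH) !(ipZr hH).
rewrite (ipC hH h (S k)) (ipC hH k (S h)) (sym k h) // (ipC hH k (S h)); ring.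
Qed.

Lemma adj_lim a b (an bn : nat -> V) K : 0 <= K ->
  (forall n x, D x -> ip (S x) (an n) = ip x (bn n)) ->
  (forall d, 0 < d -> exists n, ip (a - an n) (a - an n) <= K * d /\
                               ip (b - bn n) (b - bn n) <= K * d) ->
  adjoint_graph ip D S a b.
Proof.
move=> K0 Hn Hd x dx.
apply/eqP; rewrite -subr_eq0; apply/eqP.
apply: (@zero_of_small _ _ (2 * K * (ip (S x) (S x) + ip x x))).
  by rewrite !mulr_ge0 // addr_ge0 // n2_ge0.
move=> d d0; have [n [h1 h2]] := Hd d d0.
have e : ip (S x) a - ip x b = ip (S x) (a - an n) + - ip x (b - bn n).
  by rewrite !(ipBr hH) Hn //; ring.
rewrite e; apply: (le_trans (sqr_add_le _ _)).
have c1 := CS hH (S x) (a - an n); have c2 := CS hH x (b - bn n).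
have p1 := n2_ge0 hH (S x); have p2 := n2_ge0 hH x.
have b1 : ip (S x) (S x) * ip (a - an n) (a - an n) <= ip (S x) (S x) * (K * d).
  by rewrite ler_wpM2l.
have b2 : ip x x * ip (b - bn n) (b - bn n) <= ip x x * (K * d).
  by rewrite ler_wpM2l.
rewrite sqrrN.
have -> : d * (2 * K * (ip (S x) (S x) + ip x x)) = 2 * (ip (S x) (S x) * (K * d)) + 2 * (ip x x * (K * d)) by ring.
lra.
Qed.


Lemma surj (sa : self_adjoint ip D S) t : t != 0 ->
  forall u, exists2 w, domM D w & MSS_shift S t w = u.
Proof.
move=> t0 u.
have sym := sym_of_sa sa.
have hP := hilbP hH.
pose C := fun c => exists2 w, domM D w & c = MSS_shift S t w.
have MS0 : MSS_shift S t 0 = 0.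
  by rewrite /MSS_shift /MSS /= S0 scaler0 oppr0 addr0.
have C0 : C 0 by exists 0; [split; exact: D0 | by rewrite MS0].
have Clin a x y : C x -> C y -> C (a *: x + y).
  by move=> [w1 d1 ->] [w2 d2 ->]; exists (a *: w1 + w2); [exact: domM_lin | rewrite MS_lin].
have Cperp v : (forall c, C c -> ipP ip c v = 0) -> v = 0.
  case: v => p q Hv.
  have hq : adjoint_graph ip D S q (t *: p).
    move=> h dh; have := Hv (MSS_shift S t (h, 0)) (ex_intro2 _ _ (h,0) (conj dh D0) erefl).
    rewrite /ipP /MSS_shift /MSS /= S0 !scaler0 !oppr0 ?addr0 ?add0r.
    rewrite (ipNl hH) !(ipZl hH) (ipZr hH); lra.
  have hp : adjoint_graph ip D S p ((-t) *: q).
    move=> k dk; have := Hv (MSS_shift S t (0, k)) (ex_intro2 _ _ (0,k) (conj D0 dk) erefl).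
    rewrite /ipP /MSS_shift /MSS /= S0 !scaler0 !oppr0 ?addr0 ?add0r.
    rewrite !(ipNl hH) !(ipZl hH) (ipZr hH); lra.
  have [dq eq] := (sa q (t *: p)).1 hq; have [dp ep] := (sa p _).1 hp.
  have e1 := sym p q dp dq.
  rewrite -eq -ep (ipZl hH) (ipZr hH) in e1.
  have : t * (ip p p + ip q q) = 0 by rewrite mulrDr; lra.
  move/eqP; rewrite mulf_eq0 (negbTE t0) /= => /eqP s0.
  have hp0 := n2_ge0 hH p; have hq0 := n2_ge0 hH q.
  have ep0 : ip p p = 0 by lra.
  have eq0 : ip q q = 0 by lra.
  by rewrite (n2_eq0 hH ep0) (n2_eq0 hH eq0).
have hd n : exists w, domM D w /\
    ipP ip (u - MSS_shift S t w) (u - MSS_shift S t w) < eps R n ^+ 2.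
  have [c [w dw ->] h] := dense_perp hP C0 Clin Cperp u (eps_gt0 R n).
  by exists w.
have [w Hw] := fchoice hd.
have dwn n : domM D (w n) by case: (Hw n).
have t2 : 0 < t ^+ 2 by rewrite lt_def sqr_ge0 sqrf_eq0 t0.
have Cau : forall d, 0 < d -> exists N : nat, forall m n : nat,
    (N <= m)%N -> (N <= n)%N -> ipP ip (w m - w n) (w m - w n) < d.
  move=> d d0.
  have [N HN] := arch_small (divr_gt0 (mulr_gt0 d0 t2) (ltr0Sn _ 3)).
  exists N => m n Nm Nn.
  have dw : domM D (w m - w n).
    by case: (dwn m) => a1 a2; case: (dwn n) => b1 b2; split; apply: DB.
  have ni := normid sym t dw.
  have MSd : MSS_shift S t (w m - w n) = MSS_shift S t (w m) - MSS_shift S t (w n).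
    have -> : w m - w n = (-1) *: w n + w m by rewrite scaleN1r addrC.
    by rewrite MS_lin // scaleN1r addrC.
  have eq2 : MSS_shift S t (w m) - MSS_shift S t (w n) =
      (u - MSS_shift S t (w n)) + - (u - MSS_shift S t (w m)).
    exact: zid1.
  rewrite MSd eq2 !nrm2P_ipP in ni.
  have le1 := n2D_le hP (u - MSS_shift S t (w n)) (- (u - MSS_shift S t (w m))).
  rewrite (n2N hP) in le1.
  have := (Hw n).2; have := (Hw m).2.
  have := eps_sq_le R n; have := eps_sq_le R m.
  have := HN n Nn; have := HN m Nm.
  have := n2_ge0 hP (MSS S (w m - w n)).
  move=> *.
  rewrite -(ltr_pM2l t2).
  have : t ^+ 2 * (d * t ^+ 2 / 4%:R) = d * t ^+ 2 * t ^+ 2 / 4%:R by ring.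
  lra.
have [wl Hl] := complete hP Cau.
have ev d : 0 < d -> exists n, ipP ip (w n - wl) (w n - wl) < d /\ eps R n < d.
  by move=> d0; apply: eventually2; [exact: Hl | exact: arch_small].
have c1 x : ip x.1 x.1 <= ipP ip x x by rewrite /ipP lerDl n2_ge0.
have c2 x : ip x.2 x.2 <= ipP ip x x by rewrite /ipP lerDr n2_ge0.
have Kp : 0 <= 2 * t ^+ 2 + 2 by have := sqr_ge0 t; lra.
have hA : adjoint_graph ip D S wl.1 (t *: wl.2 + u.2).
  apply: (@adj_lim _ _ (fun n => (w n).1) (fun n => S (w n).1) (2 * t ^+ 2 + 2) Kp).
    by move=> n x dx; apply: sym => //; case: (dwn n).
  move=> d d0; have [n [h1 h2]] := ev d d0; exists n; split.
    have := c1 (wl - w n); rewrite (n2_sym hP) /= => h3.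
    have := mulr_ge0 (sqr_ge0 t) (ltW d0); lra.
  rewrite (zid2 _ (t *: (w n).2)) -scalerBr.
  apply: (le_trans (n2D_le hH _ _)); rewrite (n2Z hH).
  have := c2 (wl - w n); rewrite (n2_sym hP) /= => h3.
  have := c2 (u - MSS_shift S t (w n)); rewrite /= => h4.
  have := (Hw n).2; have := eps_sq_le R n.
  have b1 : t ^+ 2 * ip (wl.2 - (w n).2) (wl.2 - (w n).2) <= t ^+ 2 * d.
    by rewrite ler_wpM2l ?sqr_ge0 // ltW //; lra.
  move=> hh1 hh2; lra.
have hB : adjoint_graph ip D S wl.2 (- u.1 - t *: wl.1).
  apply: (@adj_lim _ _ (fun n => (w n).2) (fun n => S (w n).2) (2 * t ^+ 2 + 2) Kp).
    by move=> n x dx; apply: sym => //; case: (dwn n).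
  move=> d d0; have [n [h1 h2]] := ev d d0; exists n; split.
    have := c2 (wl - w n); rewrite (n2_sym hP) /= => h3.
    have := mulr_ge0 (sqr_ge0 t) (ltW d0); lra.
  rewrite (zid3 _ (t *: (w n).1)) -scalerBr.
  apply: (le_trans (n2D_le hH _ _)); rewrite (n2Z hH) (n2N hH).
  have := c1 (wl - w n); rewrite (n2_sym hP) /= => h3.
  have := c1 (u - MSS_shift S t (w n)); rewrite /= => h4.
  have := (Hw n).2; have := eps_sq_le R n.
  have b1 : t ^+ 2 * ip ((w n).1 - wl.1) ((w n).1 - wl.1) <= t ^+ 2 * d.
    by rewrite ler_wpM2l ?sqr_ge0 // ltW // (n2_sym hH); lra.
  move=> hh1 hh2; lra.
have [dA eA] := (sa _ _).1 hA; have [dB eB] := (sa _ _).1 hB.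
exists wl; first by split.
rewrite (surjective_pairing u) /MSS_shift /MSS /= -eA -eB.
by rewrite zid4 zid5.
Qed.

End Op.

Section Core.
Variables (R : realType) (V : lmodType R) (ip : V -> V -> R).
Hypothesis hH : is_hilbert id ip.
Variables (D : V -> Prop) (S : V -> V).
Hypothesis hS : is_linear_operator D S.

Lemma MS_sub t w1 w2 : domM D w1 -> domM D w2 ->
  MSS_shift S t (w1 - w2) = MSS_shift S t w1 - MSS_shift S t w2.
Proof.
move=> d1 d2; have -> : w1 - w2 = (-1) *: w2 + w1 by rewrite scaleN1r addrC.
by rewrite (MS_lin hS) // scaleN1r addrC.
Qed.

Lemma domM_sub w1 w2 : domM D w1 -> domM D w2 -> domM D (w1 - w2).
Proof. by case=> a1 a2 [b1 b2]; split; apply: (DB hS). Qed.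

Lemma core : corollary_equiv ip D S.
Proof.
have hP := hilbP hH.
split.
- move=> [dd sa] t _ t0.
  have sym := sym_of_sa sa.
  have t2 : 0 < t ^+ 2 by rewrite lt_def sqr_ge0 sqrf_eq0 t0.
  have bnd w : domM D w -> t ^+ 2 * nrm2P ip w <= nrm2P ip (MSS_shift S t w).
    move=> dw; rewrite (normid hH sym) //; rewrite lerDr !nrm2P_ipP n2_ge0 //.
  have inj w1 w2 : domM D w1 -> domM D w2 ->
      MSS_shift S t w1 = MSS_shift S t w2 -> w1 = w2.
    move=> d1 d2 e; apply/eqP; rewrite -subr_eq0; apply/eqP.
    apply: (n2_eq0 hP).
    have := bnd _ (domM_sub d1 d2); rewrite MS_sub // e subrr !nrm2P_ipP (ip0l hP).
    have := n2_ge0 hP (w1 - w2) => h1 h2.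
    have : t ^+ 2 * ipP ip (w1 - w2) (w1 - w2) = 0.
      apply/eqP; rewrite eq_le h2 /=; exact: mulr_ge0 (ltW t2) h1.
    by move/eqP; rewrite mulf_eq0 (gt_eqF t2) /= => /eqP.
  have opn T : is_inverse_shift D S t T -> opnorm_le ip T (`|t|^-1).
    move=> [T1 T2]; split; first by rewrite invr_ge0 normr_ge0.
    move=> u; rewrite exprVn real_normK ?num_real // ler_pdivlMl //.
    by have [dT eT] := T1 u; have := bnd _ dT; rewrite eT.
  split => //.
  split; first exact: inj.
  have hs u : exists w, domM D w /\ MSS_shift S t w = u.
    by have [w ? ?] := surj hH hS sa t0 u; exists w.
  have [T HT] := fchoice hs.
  have Tinv : is_inverse_shift D S t T.
    split => [u|w dw]; first by have [? ?] := HT u.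
    by apply: inj => //; [case: (HT (MSS_shift S t w)) | case: (HT (MSS_shift S t w))].
  by exists T => //; exists (`|t|^-1); apply: opn.
move=> H.
have res t : t != 0 -> exists T, is_inverse_shift D S t T /\ opnorm_le ip T `|t|^-1.
  move=> t0; have [[_ [T HT _]] hb] := H t (num_real t) t0; exists T; split => //.
  exact: hb.
have skew w : domM D w -> ipP ip (MSS S w) w = 0.
  move=> dw.
  pose A := ipP ip (MSS S w) (MSS S w); pose B := ipP ip (MSS S w) w.
  have key t : t != 0 -> 2 * t * B <= A.
    move=> t0; have [T [[T1 T2] [_ hb]]] := res t t0.
    have t2 : 0 < t ^+ 2 by rewrite lt_def sqr_ge0 sqrf_eq0 t0.
    have := hb (MSS_shift S t w); rewrite T2 // exprVn real_normK ?num_real // ler_pdivlMl //.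
    rewrite MS_split !nrm2P_ipP (n2B hP) (ipZr hP) (n2Z hP) /A /B; lra.
  have A0 : 0 <= A := n2_ge0 hP _.
  apply/eqP; apply: contraT => Bn.
  have A1 : A + 1 != 0 by rewrite gt_eqF // ltr_wpDl.
  have := key ((A + 1) / B) (mulf_neq0 A1 (invr_neq0 Bn)).
  have -> : 2 * ((A + 1) / B) * B = 2 * (A + 1) by field.
  lra.
have sym h k : D h -> D k -> ip (S h) k = ip h (S k).
  move=> dh dk; have := skew (h, k) (conj dh dk).
  rewrite /ipP /MSS /= (ipNl hH) (ipC hH h (S k)); lra.
have sa : self_adjoint ip D S.
  move=> y z; split; last by move=> [dy ->] x dx; exact: sym.
  move=> adj.
  have m10 : (-1 : R) != 0 by rewrite oppr_eq0 oner_eq0.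
  have [Tm [[Tm1 _] _]] := res (-1) m10.
  case: (Tm (-z, y)) (Tm1 (-z, y)) => h k [[/= dh dk] e].
  rewrite /MSS_shift /MSS /= in e; case: e => e1 e2.
  have [T1 [[T11 _] _]] := res 1 (oner_neq0 R).
  case: (T1 (-h, y - k)) (T11 (-h, y - k)) => h' k' [[/= dh' dk'] e'].
  rewrite /MSS_shift /MSS /= in e'; case: e' => e'1 e'2.
  have yE : y = S h + k by rewrite -e2 scaleN1r opprK.
  have zE : z = S k - h by apply: oppr_inj; rewrite -e1 scaleN1r opprB opprK addrC.
  have x0 : ((-h, y - k) : V * V) = 0.
    apply: (n2_eq0 hP).
    have -> : ipP ip (-h, y - k) (-h, y - k) =
        ipP ip (- S k' - 1 *: h', S h' - 1 *: k') (-h, y - k) by rewrite e'1 e'2.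
    rewrite /ipP /= !scale1r !(ipBl hH) !(ipBr hH) !(ipNl hH) !(ipNr hH).
    rewrite (adj h' dh') (sym k' h dk' dh) (sym h' k dh' dk) yE zE.
    rewrite !(ipDr hH) ?(ipBr hH) (ipNr hH); ring.
  case: x0 => /eqP; rewrite oppr_eq0 => /eqP h0 /eqP; rewrite subr_eq0 => /eqP yk.
  split; first by rewrite yk.
  by rewrite zE h0 subr0 yk.
split => //.
move=> x e e0; apply: (dense_perp hH (C := D) (D0 hS)) => //.
- by move=> a x1 y1; apply: (Dlin hS).
- move=> v hv.
  have hA : adjoint_graph ip D S 0 v by move=> x1 dx1; rewrite (ip0r hH) hv.
  by have [_ ->] := (sa 0 v).1 hA; exact: (S0 hS).
Qed.

End Core.

Local Open Scope complex_scope.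

Section Alias.
Variables (R : realType) (V : lmodType R[i]).
Definition RV : Type := V.
HB.instance Definition _ := GRing.Zmodule.on RV.
Definition scR (r : R) (x : RV) : RV := ((r%:C : R[i]) *: (x : V)).
Lemma scRA a b v : scR a (scR b v) = scR (a * b) v.
Proof. by rewrite /scR scalerA rmorphM. Qed.
Lemma scR1 : left_id 1 scR.
Proof. by move=> v; rewrite /scR rmorph1 scale1r. Qed.
Lemma scRDr : right_distributive scR +%R.
Proof. by move=> a u v; rewrite /scR scalerDr. Qed.
Lemma scRDl v : {morph scR^~ v : a b / a + b}.
Proof. by move=> a b; rewrite /scR rmorphD scalerDl. Qed.
HB.instance Definition _ := GRing.Zmodule_isLmodule.Build R RV scRA scR1 scRDr scRDl.
End Alias.

Lemma scRE (R : realType) (V : lmodType R[i]) (r : R) (x : RV V) : r *: x = ((r%:C : R[i]) *: (x : V) : V).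
Proof. by []. Qed.

Section Cplx.
Variables (R : realType) (V : lmodType R[i]) (ip : V -> V -> R[i]).
Hypothesis hH : is_hilbert (@conjc R) ip.

Definition ipR (x y : RV V) : R := complex.Re (ip x y).

Let lin : forall a x y z, ip (a *: x + y) z = a * ip x z + ip y z.
Proof. by case: hH. Qed.
Lemma cip0l z : ip 0 z = 0.
Proof. have := lin 1 0 0 z; rewrite scaler0 addr0 mul1r => h.
by apply: (@addrI _ (ip 0 z)); rewrite addr0 -h. Qed.
Lemma cipZl a x z : ip (a *: x) z = a * ip x z.
Proof. by have := lin a x 0 z; rewrite addr0 cip0l addr0. Qed.
Lemma cipDl x y z : ip (x + y) z = ip x z + ip y z.
Proof. by have := lin 1 x y z; rewrite scale1r mul1r. Qed.

Lemma ReM_real (r : R) (w : R[i]) : complex.Re (r%:C * w) = r * complex.Re w.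
Proof. by case: w => a b /=; ring. Qed.

Lemma n2_real x : ip x x = (ipR x x)%:C.
Proof.
have : 0 <= ip x x by case: hH.
rewrite /ipR; case: (ip x x) => a b; rewrite lecE /= => /andP[/eqP -> _].
by [].
Qed.

Lemma hilbR : is_hilbert id ipR.
Proof.
split.
- move=> a x y z; rewrite /ipR.
  have -> : (a *: x + y : RV V) = ((a%:C : R[i]) *: (x : V) + y : V) by [].
  rewrite lin; case: (ip x z) => a1 b1; case: (ip y z) => a2 b2 /=; ring.
- move=> x y; rewrite /ipR /=; case: hH => _ -> _ _ _.
  by case: (ip y x).
- move=> x; have : 0 <= ip x x by case: hH.
  by rewrite n2_real lecR.
- move=> x h; case: hH => _ _ _ hd _; apply: hd.
  by rewrite n2_real h.
- move=> u Hu; case: hH => _ _ _ _ hc.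
  have [l Hl] : exists l : V, forall e : R[i], 0 < e -> exists N : nat, forall n : nat,
      (N <= n)%N -> nrm2 ip (u n - l) < e ^+ 2.
    apply: hc => e e0.
    have ee : e = (complex.Re e)%:C by move: e0; rewrite ltcE; case: e => a b /= /andP[/eqP -> _].
    have re0 : 0 < complex.Re e by move: e0; rewrite ltcE => /andP[_].
    have [N HN] := Hu _ re0; exists N => m n Nm Nn.
    rewrite /nrm2 n2_real ee -rmorphXn ltcR; exact: HN.
  exists l => e e0.
  have e0' : 0 < (e%:C : R[i]) by rewrite ltcR.
  have [N HN] := Hl _ e0'; exists N => n Nn.
  by have := HN n Nn; rewrite /nrm2 n2_real -rmorphXn ltcR.
Qed.


Lemma nrm2C (x : V) : nrm2 ip x = (nrm2 ipR x)%:C.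
Proof. exact: n2_real. Qed.

Lemma nrm2PC (u : V * V) : nrm2P ip u = (nrm2P ipR u)%:C.
Proof. by rewrite /nrm2P !nrm2C rmorphD. Qed.

Variables (D : V -> Prop) (S : V -> V).
Hypothesis hS : is_linear_operator D S.

Lemma hSR : is_linear_operator (V := RV V) D S.
Proof.
case: hS => h0 h1 h2; split => //.
- by move=> a x y dx dy; exact: (h1 (a%:C) x y dx dy).
- by move=> a x y dx dy; exact: (h2 (a%:C) x y dx dy).
Qed.

Lemma ReiM (w : R[i]) : complex.Re ('i * w) = - complex.Im w.
Proof. by case: w => a b /=; ring. Qed.

Lemma adjC y z : adjoint_graph ip D S y z <-> adjoint_graph ipR D S y z.
Proof.
split; first by move=> h x dx; rewrite /ipR h.
move=> h x dx.
have dix : D ('i *: x) by case: hS => h0 h1 _; have := h1 'i x 0 dx h0; rewrite addr0.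
have Six : S ('i *: x) = 'i *: S x.
  case: hS => h0 _ h2; have := h2 'i x 0 dx h0; rewrite addr0 => ->.
  by rewrite (S0 hSR) addr0.
have e1 := h x dx; have e2 := h _ dix.
rewrite /ipR Six !cipZl !ReiM in e1 e2.
move: e1 e2; case: (ip (S x) y) => a1 b1; case: (ip x z) => a2 b2 /= -> /eqP.
by rewrite eqr_opp => /eqP ->.
Qed.

Lemma saC : self_adjoint ip D S <-> self_adjoint ipR D S.
Proof.
split => h y z.
- by rewrite -adjC; exact: h.
- by rewrite adjC; exact: h.
Qed.

Lemma ddC : densely_defined ip D <-> densely_defined ipR D.
Proof.
split => h x e e0.
- have e0' : 0 < (e%:C : R[i]) by rewrite ltcR.
  have [y dy hy] := h x _ e0'; exists y => //.
  by move: hy; rewrite nrm2C -rmorphXn ltcR.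
- have ee : e = (complex.Re e)%:C by move: e0; rewrite ltcE; case: e => a b /= /andP[/eqP -> _].
  have re0 : 0 < complex.Re e by move: e0; rewrite ltcE => /andP[_].
  have [y dy hy] := h x _ re0; exists y => //.
  by rewrite nrm2C ee -rmorphXn ltcR.
Qed.

Lemma opnC T c : opnorm_le ip T (c%:C) <-> opnorm_le ipR T c.
Proof.
rewrite /opnorm_le; split => [[c0 h]|[c0 h]]; split.
- by move: c0; rewrite ler0c.
- by move=> u; have := h u; rewrite !nrm2PC -rmorphXn -rmorphM lecR.
- by rewrite ler0c.
- by move=> u; rewrite !nrm2PC -rmorphXn -rmorphM lecR.
Qed.

Lemma bndC T : bounded_op ip T <-> bounded_op ipR T.
Proof.
split => [[c hc]|[c hc]].
- have c0 : 0 <= c by case: hc.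
  have cc : c = (complex.Re c)%:C by move: c0; rewrite lecE; case: c {hc} => a b /= /andP[/eqP -> _].
  by exists (complex.Re c); rewrite -opnC -cc.
- by exists (c%:C); rewrite opnC.
Qed.

Lemma resC r : in_resolvent ip D S (r%:C) <-> in_resolvent ipR D S r.
Proof.
split => [[h1 [T h2 h3]]|[h1 [T h2 h3]]]; split.
- exact: h1.
- by exists T; [exact: h2 | rewrite -bndC].
- exact: h1.
- by exists T; [exact: h2 | rewrite bndC].
Qed.


Lemma normC_inv (r : R) : `|(r%:C : R[i])|^-1 = ((`|r|^-1)%:C : R[i]).
Proof.
have -> : `|(r%:C : R[i])| = (`|r|)%:C by rewrite normc_def /= expr0n addr0 sqrtr_sqr.
by rewrite fmorphV.
Qed.

Lemma cplx_core : corollary_equiv ip D S.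
Proof.
have hc := core hilbR hSR.
split.
- move=> [dd sa] t tr t0.
  rewrite -(RRe_real tr) in t0 *.
  set r := complex.Re t in t0 *.
  have r0 : r != 0 by apply: contra t0 => /eqP ->.
  have [res bnd] := (hc.1 (conj (ddC.1 dd) (saC.1 sa))) r (num_real r) r0.
  split; first by rewrite resC.
  by move=> T hT; rewrite normC_inv opnC; exact: bnd T hT.
- move=> H.
  suff [dd sa] : densely_defined ipR D /\ self_adjoint ipR D S.
    by split; [exact: ddC.2 dd | exact: saC.2 sa].
  apply: hc.2 => r _ r0.
  have rr : (r%:C : R[i]) \is Num.real by apply/complex_realP; exists r.
  have rn : (r%:C : R[i]) != 0 by apply: contra r0 => /eqP/(congr1 (@complex.Re R)) /= ->.
  have [res bnd] := H _ rr rn.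
  split; first by rewrite -resC.
  by move=> T hT; rewrite -opnC -normC_inv; exact: bnd T hT.
Qed.

End Cplx.

Local Close Scope complex_scope.

Theorem corollary4p2 :
  (* real Hilbert spaces *)
  (forall (R : realType) (V : lmodType R) (ip : V -> V -> R)
          (D : V -> Prop) (S : V -> V),
     is_hilbert id ip -> is_linear_operator D S ->
     corollary_equiv ip D S) /\
  (* complex Hilbert spaces *)
  (forall (R : realType) (V : lmodType R[i]) (ip : V -> V -> R[i])
          (D : V -> Prop) (S : V -> V),
     is_hilbert (@conjc R) ip -> is_linear_operator D S ->
     corollary_equiv ip D S).
Proof.
split.
- by move=> R V ip D S hH hS; exact (@core R V ip hH D S hS).
- by move=> R V ip D S hH hS; exact (@cplx_core R V ip hH D S hS).
Qed.
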